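(* There is an absolute constant $C$ such that the following holds. Let $H=(V,E)$ be a connected contextuality scenario all of whose edges are binary, i.e. $|e|=2$ for all $e\in E$. Then $H$ has a $2$-partite conditional interpretation as a game of size $O(|V|)$: there exist hypergraphs $B_1,B_2$ with pairwise disjoint edges covering their vertex sets, and a rule $r$ on $B_1\otimes B_2$, such that the game $(B_1\otimes B_2)_r$ has at most $C|V|$ vertices and $H$ is a conditional contextuality scenario of $(B_1\otimes B_2)_r$.
   Context: A contextuality scenario is a hypergraph $H=(V,E)$ (finite $V$, $E$ a set of subsets of $V$) with $V=\bigcup_{e\in E}e$; its size is $|V|$. A probabilistic model on $H$ is a function $p:V\to[0,1]$ with $\sum_{v\in e}p(v)=1$ for all $e\in E$; $\mathcal{G}(H)$ denotes the set of such models. For $W\subseteq V$, the induced sub-hypergraph is $H_W=(W,\{e\cap W:e\in E\})$. Conditional contextuality: given hypergraphs $H=(V,E)$ and $H'=(V',E')$, $H'$ is a conditional contextuality scenario of $H$ if there is an injection $\phi:V'\to V$ such that (i) for all $p\in\mathcal{G}(H)$, $p\circ\phi\in\mathcal{G}(H')$, and (ii) for all $p'\in\mathcal{G}(H')$ there exists $p\in\mathcal{G}(H)$ with $p\circ\phi=p'$. Foulis–Randall product: for hypergraphs $H_A=(V_A,E_A)$, $H_B=(V_B,E_B)$, let $E_{A\to B}=\{\bigcup_{a\in e_A}(\{a\}\times f(a)) : e_A\in E_A,\ f:e_A\to E_B\}$ and $E_{A\gets B}=\{\bigcup_{b\in e_B}(g(b)\times\{b\}) : e_B\in E_B,\ g:e_B\to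 E_A\}$; then $H_A\otimes H_B=(V_A\times V_B,\ E_{A\to B}\cup E_{A\gets B})$. Bipartite game: for $B_1=(V_1,E_1)$, $B_2=(V_2,E_2)$ with pairwise disjoint edges covering their vertex sets and $H=(V,E)=B_1\otimes B_2$, edges of the form $e_1\times e_2$ ($e_i\in E_i$) are questions, $Q_E$ is the set of questions; a rule is $r:Q_E\to\mathcal{P}(V)$ with $r(e)\subseteq e$; with $W_r=\bigcup_{e\in Q_E}r(e)$, the game on $H$ under $r$ is $H_r=(W_r,\{e\cap W_r:e\in E\})$. *)

(* Defs.v *)
From HB Require Import structures.
From mathcomp Require Import all_boot all_order all_algebra.
From mathcomp Require Import Rstruct.
Set Implicit Arguments. Unset Strict Implicit. Unset Printing Implicit Defensive.
Import Order.TTheory GRing.Theory Num.Theory.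
Local Open Scope ring_scope.

(* A hypergraph (contextuality scenario) is a finite type V together with a
   set of edges E : {set {set V}}; the covering condition V = \bigcup E is
   imposed separately as [cover E = [set: V]]. *)

Definition prob_model (R : numDomainType) (V : finType) (E : {set {set V}})
  (p : V -> R) : Prop :=
  (forall v, 0 <= p v <= 1) /\ (forall e, e \in E -> \sum_(v in e) p v = 1).

Definition cond_scenario (R : numDomainType) (V' : finType) (E' : {set {set V'}})
  (V : finType) (E : {set {set V}}) : Prop :=
  exists phi : V' -> V,
    injective phi /\
    (forall p : V -> R, prob_model E p -> prob_model E' (fun v => p (phi v))) /\
    (forall p' : V' -> R, prob_model E' p' ->
       exists p : V -> R, prob_model E p /\ forall v, p (phi v) = p' v).

Definition hconnected (V : finType) (E : {set {set V}}) : Prop :=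
  forall x y : V,
    connect (fun a b => [exists e in E, (a \in e) && (b \in e)]) x y.

Definition disjoint_cover (V : finType) (E : {set {set V}}) : Prop :=
  trivIset E /\ cover E = [set: V].

Definition FR_edges_AB (VA VB : finType) (EA : {set {set VA}}) (EB : {set {set VB}})
  : {set {set VA * VB}} :=
  [set F : {set VA * VB} | [exists eA in EA, exists f : {ffun VA -> {set VB}},
      [forall a in eA, f a \in EB] &&
      (F == \bigcup_(a in eA) setX [set a] (f a))]].

Definition FR_edges_BA (VA VB : finType) (EA : {set {set VA}}) (EB : {set {set VB}})
  : {set {set VA * VB}} :=
  [set F : {set VA * VB} | [exists eB in EB, exists g : {ffun VB -> {set VA}},
      [forall b in eB, g b \in EA] &&
      (F == \bigcup_(b in eB) setX (g b) [set b])]].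

Definition FR_product (VA VB : finType) (EA : {set {set VA}}) (EB : {set {set VB}})
  : {set {set VA * VB}} :=
  FR_edges_AB EA EB :|: FR_edges_BA EA EB.

Definition questions (V1 V2 : finType) (E1 : {set {set V1}}) (E2 : {set {set V2}})
  : {set {set V1 * V2}} :=
  [set setX e1 e2 | e1 in E1, e2 in E2].

Definition is_rule (V1 V2 : finType) (E1 : {set {set V1}}) (E2 : {set {set V2}})
  (r : {set V1 * V2} -> {set V1 * V2}) : Prop :=
  forall e, e \in questions E1 E2 -> r e \subset e.

Definition game_verts (V1 V2 : finType) (E1 : {set {set V1}}) (E2 : {set {set V2}})
  (r : {set V1 * V2} -> {set V1 * V2}) : {set V1 * V2} :=
  \bigcup_(e in questions E1 E2) r e.

Definition subvert (T : finType) (W : {set T}) : finType := {x : T | x \in W}.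

Definition induced_edges (T : finType) (E : {set {set T}}) (W : {set T})
  : {set {set subvert W}} :=
  [set [set x : subvert W | val x \in e] | e : {set T} in E].

Definition game_edges (V1 V2 : finType) (E1 : {set {set V1}}) (E2 : {set {set V2}})
  (r : {set V1 * V2} -> {set V1 * V2}) :=
  induced_edges (FR_product E1 E2) (game_verts E1 E2 r).

(* Main.v *)
Require Import Defs.
From mathcomp Require Import all_boot all_order all_algebra.
From mathcomp Require Import Rstruct lra zify.
From Stdlib Require Import Classical.
Set Implicit Arguments. Unset Strict Implicit. Unset Printing Implicit Defensive.
Import Order.TTheory GRing.Theory Num.Theory.

Definition blk (T : finType) (x : T) : {set T * bool} := [set z | z.1 == x].
Definition blks (T : finType) : {set {set T * bool}} := [set blk x | x : T].

Lemma blk_dc (T : finType) : disjoint_cover (blks T).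
Proof.
split.
  apply/trivIsetP => A B /imsetP[x _ ->] /imsetP[y _ ->] nxy.
  rewrite -setI_eq0; apply/eqP/setP => z; rewrite !inE.
  apply/negP => /andP[/eqP h1 /eqP h2]; move: nxy; by rewrite -h1 -h2 eqxx.
apply/setP => z; rewrite inE; apply/bigcupP; exists (blk z.1); first exact: imset_f.
by rewrite inE.
Qed.

Lemma in_bcAB (A B : finType) (S : {set A}) (h : A -> {set B}) z :
  (z \in \bigcup_(a in S) setX [set a] (h a)) = (z.1 \in S) && (z.2 \in h z.1).
Proof.
apply/bigcupP/andP => [[a aS]|[h1 h2]]; last by exists z.1 => //; rewrite !inE eqxx.
by rewrite !inE => /andP[/eqP -> ->].
Qed.

Lemma in_bcBA (A B : finType) (S : {set B}) (h : B -> {set A}) z :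
  (z \in \bigcup_(b in S) setX (h b) [set b]) = (z.2 \in S) && (z.1 \in h z.2).
Proof.
apply/bigcupP/andP => [[a aS]|[h1 h2]].
  by rewrite !inE => /andP[h1 /eqP e]; subst a.
by exists z.2 => //; rewrite !inE h2 eqxx.
Qed.

Section Gadget.
Variables (X Y : finType) (s : X -> Y -> bool).
Definition E1g := blks X.
Definition E2g := blks Y.
Definition cnd (z : (X * bool) * (Y * bool)) := z.2.2 == z.1.2 (+) s z.1.1 z.2.1.
Definition rg (e : {set (X * bool) * (Y * bool)}) := [set z in e | cnd z].
Definition Wg := game_verts E1g E2g rg.

Lemma rule_g : is_rule E1g E2g rg.
Proof. by move=> e _; apply/subsetP => z; rewrite inE => /andP[]. Qed.

Lemma inW z : (z \in Wg) = cnd z.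
Proof.
apply/bigcupP/idP => [[e _]|hz]; first by rewrite inE => /andP[].
exists (setX (blk z.1.1) (blk z.2.1)).
  by apply/imset2P; exists (blk z.1.1) (blk z.2.1); rewrite ?imset_f.
by rewrite !inE !eqxx.
Qed.

Lemma cardW : #|Wg| <= #|X| * 2 * (#|Y| * 2).
Proof. by rewrite -(card_bool) -!card_prod max_card. Qed.

Lemma ptA_proof x a y : ((x, a), (y, a (+) s x y)) \in Wg.
Proof. by rewrite inW /cnd /=. Qed.

Definition ptA x a y : subvert Wg := @exist _ (fun z => z \in Wg) _ (ptA_proof x a y).

Definition T1 x (f : bool -> Y) : {set subvert Wg} :=
  [set w : subvert Wg | ((val w).1.1 == x) && ((val w).2.1 == f (val w).1.2)].
Definition T2 y (g : bool -> X) : {set subvert Wg} :=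
  [set w : subvert Wg | ((val w).2.1 == y) && ((val w).1.1 == g (val w).2.2)].

Lemma T1_in x f : T1 x f \in game_edges E1g E2g rg.
Proof.
apply/imsetP; exists (\bigcup_(a in blk x) setX [set a] (blk (f a.2))).
  rewrite inE; apply/orP; left; rewrite inE; apply/exists_inP; exists (blk x).
    exact: imset_f.
  apply/existsP; exists [ffun a => blk (f a.2)]; apply/andP; split.
    by apply/forall_inP => a _; rewrite ffunE imset_f.
  by apply/eqP; apply: eq_bigr => a _; rewrite ffunE.
apply/setP => w; rewrite !inE in_bcAB !inE.
case: w => [[[x' a] [y' b]] hw] /=; by [].
Qed.

Lemma T2_in y g : T2 y g \in game_edges E1g E2g rg.
Proof.
apply/imsetP; exists (\bigcup_(b in blk y) setX (blk (g b.2)) [set b]).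
  rewrite inE; apply/orP; right; rewrite inE; apply/exists_inP; exists (blk y).
    exact: imset_f.
  apply/existsP; exists [ffun b => blk (g b.2)]; apply/andP; split.
    by apply/forall_inP => a _; rewrite ffunE imset_f.
  by apply/eqP; apply: eq_bigr => a _; rewrite ffunE.
apply/setP => w; rewrite !inE in_bcBA !inE.
case: w => [[[x' a] [y' b]] hw] /=; by [].
Qed.

Lemma blks_inv (T : finType) (B : {set T * bool}) : B \in blks T ->
  exists x, B = blk x.
Proof. by case/imsetP => x _ ->; exists x. Qed.

Lemma game_edgeP F : F \in game_edges E1g E2g rg ->
  (exists x f, F = T1 x f) \/ (exists y g, F = T2 y g).
Proof.
case/imsetP => F0; rewrite inE => /orP[]; rewrite inE.
  case/exists_inP => eA /blks_inv [x ->] /existsP [f /andP [/forall_inP Hf /eqP ->]] ->.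
  left.
  have H a : exists y, f (x, a) == blk y.
    by case: (blks_inv (Hf (x, a) _)) => [|y ->]; [rewrite inE | exists y].
  pose fy a := xchoose (H a).
  have Hfy a : f (x, a) = blk (fy a) by apply/eqP; exact: (xchooseP (H a)).
  exists x, fy; apply/setP => w; rewrite !inE in_bcAB !inE.
  case: w => [[[x' a] [y' b]] hw] /=.
  case: eqVneq => [->|] //=; by rewrite Hfy inE.
case/exists_inP => eB /blks_inv [y ->] /existsP [g /andP [/forall_inP Hg /eqP ->]] ->.
right.
have H b : exists x, g (y, b) == blk x.
  by case: (blks_inv (Hg (y, b) _)) => [|x ->]; [rewrite inE | exists x].
pose gx b := xchoose (H b).
have Hgx b : g (y, b) = blk (gx b) by apply/eqP; exact: (xchooseP (H b)).
exists y, gx; apply/setP => w; rewrite !inE in_bcBA !inE.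
case: w => [[[x' a] [y' b]] hw] /=.
case: eqVneq => [->|] //=; by rewrite Hgx inE.
Qed.

Lemma T1_set x f : T1 x f = [set ptA x false (f false); ptA x true (f true)].
Proof.
apply/setP => w; rewrite !inE -!val_eqE /=.
case: w => [[[x' a] [y' b]] hw] /=; move: hw; rewrite inW /cnd /= => /eqP ->.
rewrite !xpair_eqE; case: a; case: eqVneq => [->|] //=; rewrite ?andbF //=;
  case: eqVneq => [->|] //=; rewrite ?eqxx ?andbF //.
Qed.

Lemma T2_set y g : T2 y g =
  [set ptA (g false) (false (+) s (g false) y) y; ptA (g true) (true (+) s (g true) y) y].
Proof.
apply/setP => w; rewrite !inE -!val_eqE /=.
case: w => [[[x' a] [y' b]] hw] /=; move: hw; rewrite inW /cnd /= => /eqP hb.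
have -> : a = b (+) s x' y' by rewrite hb -addbA addbb addbF.
rewrite !xpair_eqE; case: eqVneq => [->|] //=; last by rewrite !andbF.
clear hb; rewrite !addbb ?addNb ?addbb /=.
have tf : (true == false) = false by [].
have ft : (false == true) = false by [].
have tt : (true == true) = true by [].
have ff : (false == false) = true by [].
case: b => /=; rewrite ?tf ?ft ?tt ?ff ?andbF ?andbT ?orbF /=.
  by case E: (x' == g true) => //=; move/eqP: E => ->; rewrite eqxx.
by case E: (x' == g false) => //=; move/eqP: E => ->; rewrite eqxx.
Qed.



Local Open Scope ring_scope.
Local Notation R := Rdefinitions.R.

Definition gE := game_edges E1g E2g rg.

Lemma T1_sum (p : subvert Wg -> R) x f :
  \sum_(w in T1 x f) p w = p (ptA x false (f false)) + p (ptA x true (f true)).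
Proof.
rewrite T1_set big_setU1 ?big_set1 // inE.
by apply/eqP => /(congr1 (fun z => (val z).1.2)).
Qed.

Lemma T2_sum (p : subvert Wg -> R) y g :
  \sum_(w in T2 y g) p w = p (ptA (g false) (false (+) s (g false) y) y)
                          + p (ptA (g true) (true (+) s (g true) y) y).
Proof.
rewrite T2_set big_setU1 ?big_set1 // inE.
by apply/eqP => /(congr1 (fun z => (val z).2.2)) /=; rewrite addbb addNb addbb.
Qed.

Lemma T1_eq (p : subvert Wg -> R) : prob_model gE p -> forall x f,
  p (ptA x false (f false)) + p (ptA x true (f true)) = 1.
Proof. by move=> [_ H] x f; rewrite -(T1_sum p x f); apply: H; apply: T1_in. Qed.

Lemma T2_eq (p : subvert Wg -> R) : prob_model gE p -> forall y g,
  p (ptA (g false) (false (+) s (g false) y) y)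
                          + p (ptA (g true) (true (+) s (g true) y) y) = 1.
Proof. by move=> [_ H] y g; rewrite -(T2_sum p y g); apply: H; apply: T2_in. Qed.

Lemma model_g (p : subvert Wg -> R) :
  (forall w, 0 <= p w <= 1) ->
  (forall x f, p (ptA x false (f false)) + p (ptA x true (f true)) = 1) ->
  (forall y g, p (ptA (g false) (false (+) s (g false) y) y)
                          + p (ptA (g true) (true (+) s (g true) y) y) = 1) ->
  prob_model gE p.
Proof.
move=> H0 H1 H2; split => // F /game_edgeP [[x [f ->]]|[y [g ->]]].
  by rewrite T1_sum.
by rewrite T2_sum.
Qed.

Lemma half_model : prob_model gE (fun _ => 1 / 2 : R).
Proof.
apply: model_g => *; [apply/andP; split|..]; lra.
Qed.

End Gadget.

Section Main.
Local Open Scope ring_scope.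
Local Notation R := Rdefinitions.R.

Lemma sum2 (T : finType) (p : T -> R) (u v : T) : u != v ->
  \sum_(w in [set u; v]) p w = p u + p v.
Proof. by move=> nuv; rewrite big_setU1 ?big_set1 // inE. Qed.

Lemma edge2 (V : finType) (e : {set V}) a b : #|e| = 2%N -> a \in e -> b \in e ->
  a != b -> e = [set a; b].
Proof.
move=> ce ae be nab; apply/esym/eqP.
by rewrite eqEcard subUset !sub1set ae be cards2 nab ce.
Qed.

Variables (V : finType) (E : {set {set V}}).
Hypothesis E2 : forall e, e \in E -> #|e| = 2%N.

Lemma step (p q : V -> R) : prob_model E p -> prob_model E q -> forall a b,
  [exists e in E, (a \in e) && (b \in e)] ->
  (p b = p a /\ q b = q a) \/ (p b = 1 - p a /\ q b = 1 - q a).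
Proof.
move=> Hp Hq a b /exists_inP [e eE /andP [ae be]].
case: (eqVneq a b) => [->|nab]; first by left.
have ee := edge2 (E2 eE) ae be nab.
have := Hp.2 e eE; have := Hq.2 e eE; rewrite ee !sum2 // => h1 h2.
right; split; lra.
Qed.

Lemma path_lemma (p q : V -> R) : prob_model E p -> prob_model E q -> hconnected E ->
  forall x y, (p y = p x /\ q y = q x) \/ (p y = 1 - p x /\ q y = 1 - q x).
Proof.
move=> Hp Hq Hc x y; move/connectP: (Hc x y) => [pth Hpath ->].
elim: pth x Hpath => [|z pth IH] x /=; first by left.
move/andP => [hxz hpath].
have := step Hp Hq hxz; have := IH z hpath.
move=> [[h1 h2]|[h1 h2]] [[h3 h4]|[h3 h4]]; [left|right|right|left]; split; lra.
Qed.

Definition sB (_ : V) (_ : unit) := false.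

Lemma case_bip (pstar : V -> R) v0 : hconnected E -> prob_model E pstar ->
  pstar v0 != 1 / 2 ->
  @cond_scenario R _ E _ (gE sB).
Proof.
move=> Hc Hps Hv.
pose t0 := pstar v0.
have Hv' : t0 <> 1 / 2 by apply/eqP.
pose c v := pstar v == t0.
have cval v : (c v /\ pstar v = t0) \/ (~~ c v /\ pstar v = 1 - t0).
  case: (path_lemma Hps Hps Hc v0 v) => [[h _]|[h _]].
    by left; rewrite /c h eqxx.
  right; split => //; rewrite /c h; apply/eqP => h'; apply: Hv'; subst t0; lra.
exists (fun v => ptA sB v (~~ c v) tt); split.
  by move=> u w /(congr1 (fun z => (val z).1.1)).
split.
  move=> p Hg; split; first by move=> v; apply: Hg.1.
  have Hc2 x x' : p (ptA sB x false tt) + p (ptA sB x' true tt) = 1.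
    exact: (T2_eq Hg tt (fun b => if b then x' else x)).
  move=> e eE; have /cards2P [u [w [nuw ee]]] : #|e| == 2%N by rewrite E2.
  have := Hps.2 e eE; rewrite ee !sum2 // => hs.
  case: (cval u) => [[cu hu]|[cu hu]]; case: (cval w) => [[cw hw]|[cw hw]].
  - exfalso; apply: Hv'; subst t0; lra.
  - by move/negbTE: cw => ->; rewrite cu /=.
  - by move/negbTE: cu => ->; rewrite cw /= addrC.
  - exfalso; apply: Hv'; subst t0; lra.
move=> p' Hp'; pose t := p' v0.
have t01 : 0 <= t <= 1 by apply: Hp'.1.
case/andP: t01 => t0' t1'.
exists (fun w => if (val w).2.2 then 1 - t else t); split.
  apply: model_g.
  - move=> w; case: ((val w).2.2); apply/andP; split; lra.
  - by move=> x f /=; rewrite /sB /=; lra.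
  - by move=> y g /=; rewrite /sB /=; lra.
move=> v /=; rewrite /sB addbF.
case: (path_lemma Hps Hp' Hc v0 v) => [[h1 h2]|[h1 h2]].
  case: (cval v) => [[cv _]|[cv hv]]; first by rewrite cv.
  exfalso; apply: Hv'; subst t0; lra.
case: (cval v) => [[cv hv]|[cv _]]; last by rewrite cv.
exfalso; apply: Hv'; subst t0; lra.
Qed.


Definition sP (x : option V) (y : bool) := if x is Some _ then false else y.

Lemma case_pr : (forall p : V -> R, prob_model E p -> forall v, p v = 1 / 2) ->
  @cond_scenario R _ E _ (gE sP).
Proof.
move=> Hall.
exists (fun v => ptA sP (Some v) false false); split.
  by move=> u w /(congr1 (fun z => (val z).1.1)) [].
split.
  move=> p Hg.
  have half v : p (ptA sP (Some v) false false) = 1 / 2.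
    pose x := Some v.
    have e1 : p (ptA sP x false false) + p (ptA sP x true true) = 1
      := T1_eq Hg x (fun a => a).
    have e2 : p (ptA sP x false false) + p (ptA sP None true false) = 1
      := T2_eq Hg false (fun b => if b then None else x).
    have e4 : p (ptA sP None false false) + p (ptA sP None true false) = 1
      := T1_eq Hg None (fun _ => false).
    have e5 : p (ptA sP None false false) + p (ptA sP None true true) = 1
      := T1_eq Hg None (fun a => a).
    have e6 : p (ptA sP None true true) + p (ptA sP x true true) = 1
      := T2_eq Hg true (fun b => if b then x else None).
    rewrite -/x; lra.
  split; first by move=> v; apply: Hg.1.
  move=> e eE; have /cards2P [u [w [nuw ee]]] : #|e| == 2%N by rewrite E2.
  rewrite ee sum2 // !half; lra.
move=> p' Hp'; exists (fun _ => 1 / 2); split; first exact: half_model.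
by move=> v; rewrite Hall.
Qed.

Lemma case_empty : #|V| = 0%N -> @cond_scenario R _ E _ (gE sB).
Proof.
move=> hV.
have nov (v : V) : False by have := card0_eq hV v; rewrite !inE.
exists (fun v => ptA sB v false tt); split; first by move=> u; case: (nov u).
split.
  move=> p Hg; split; first by move=> v; case: (nov v).
  move=> e eE; have := E2 eE; have := max_card e; rewrite hV.
  by case: #|e|.
move=> p' Hp'; exists (fun _ => 1 / 2); split; first exact: half_model.
by move=> v; case: (nov v).
Qed.

End Main.

Theorem theorem4p2 :
  exists C : nat,
  forall (V : finType) (E : {set {set V}}),
    cover E = [set: V] ->
    hconnected E ->
    (forall e, e \in E -> #|e| = 2) ->
    exists (V1 V2 : finType) (E1 : {set {set V1}}) (E2 : {set {set V2}})
           (r : {set V1 * V2} -> {set V1 * V2}),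
      disjoint_cover E1 /\ disjoint_cover E2 /\ is_rule E1 E2 r /\
      #|game_verts E1 E2 r| <= C * #|V| /\
      @cond_scenario Rdefinitions.R _ E _ (game_edges E1 E2 r).
Proof.
exists 16 => V E _ Hc HE2.
case: (classic (exists (p : V -> Rdefinitions.R) v0,
                  prob_model E p /\ p v0 != (1 / 2)%R)) => [[p [v0 [Hp Hv]]]|Hno].
  exists _, _, (E1g V), (E2g unit), (rg (sB (V:=V))).
  split; first exact: blk_dc. split; first exact: blk_dc. split; first exact: rule_g.
  split; last exact: (case_bip HE2 Hc Hp Hv).
  apply: leq_trans (cardW _) _; rewrite card_unit; lia.
case: (eqVneq #|V| 0) => [h0|hV].
  exists _, _, (E1g V), (E2g unit), (rg (sB (V:=V))).
  split; first exact: blk_dc. split; first exact: blk_dc. split; first exact: rule_g.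
  split; last exact: (case_empty HE2 h0).
  apply: leq_trans (cardW _) _; rewrite card_unit h0; lia.
exists _, _, (E1g (option V)), (E2g bool), (rg (sP (V:=V))).
split; first exact: blk_dc. split; first exact: blk_dc. split; first exact: rule_g.
split; last first.
  apply: case_pr => // p Hp v; apply: NNPP => hne; apply: Hno.
  by exists p, v; split => //; apply/eqP.
apply: leq_trans (cardW _) _; rewrite card_option card_bool; move: hV; lia.
Qed.
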